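(* Let $r:\mathfrak h^*\to\wedge^2\mathfrak g$ be a smooth map and let $\Lambda=\sum_{i=1}^l h_i\wedge\frac{\partial}{\partial\lambda^i}+r(\lambda)\in\Gamma(\wedge^2A)$, where $A=T\mathfrak h^*\times\mathfrak g$ is the product Lie algebroid described in the context. Then $r$ is a triangular dynamical $r$-matrix if and only if $[\Lambda,\Lambda]=0$ (Schouten bracket of the Lie algebroid $A$), i.e. if and only if $(A,\Lambda)$ defines a triangular Lie bialgebroid $(A,A^* )$, the Lie algebroid structure on $A^*$ being the one whose differential on $\Gamma(\wedge^\bullet A)$ is $d_*=[\Lambda,\cdot\,]$.
   Context: Let $\mathfrak g$ be a finite-dimensional real Lie algebra and $\mathfrak h\subset\mathfrak g$ an abelian Lie subalgebra of dimension $l$ with basis $h_1,\dots,h_l$; let $(\lambda^1,\dots,\lambda^l)$ be the induced linear coordinates on $\mathfrak h^*$. A triangular dynamical $r$-matrix is a smooth map $r:\mathfrak h^*\to\wedge^2\mathfrak g$ such that (a) (zero weight) $[h,r(\lambda)]=0$ for all $h\in\mathfrak h$, $\lambda\in\mathfrak h^*$, where $\mathfrak g$ acts on $\wedge^2\mathfrak g$ by the adjoint action, and (b) (classical dynamical Yang–Baxter equation) $\sum_i h_i\wedge\frac{\partial r}{\partial\lambda^i}+\frac12[r,r]=0$, where $[\cdot,\cdot]:\wedge^k\mathfrak g\otimes\wedge^m\mathfrak g\to\wedge^{k+m-1}\mathfrak g$ is the Schouten-type bracket extending the Lie bracket of $\mathfrak g$. The product Lie algebroid $A=T\mathfrak h^*\times\mathfrak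 g$ over $\mathfrak h^*$ has sections $(X,f)$ with $X$ a vector field on $\mathfrak h^*$ and $f:\mathfrak h^*\to\mathfrak g$ smooth, bracket $[(X,f),(Y,g)]=([X,Y],X(g)-Y(f)+[f,g])$ and anchor the projection $(X,f)\mapsto X$; the bracket extends to a Schouten bracket on $\Gamma(\wedge^\bullet A)$. *)

(* Defs.v *)
From HB Require Import structures.
From mathcomp Require Import all_boot all_order all_algebra.
From mathcomp Require Import all_classical all_reals all_analysis.
Import Order.TTheory GRing.Theory Num.Theory.
Import numFieldNormedType.Exports.

Set Implicit Arguments.
Unset Strict Implicit.
Unset Printing Implicit Defensive.

Local Open Scope ring_scope.

(* A finite-dimensional real Lie algebra g of dimension n is given by its   *)
(* structure constants c in a basis e_1..e_n : [e_a, e_b] = sum_k c a b k e_k.*)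
(* Multivectors over a space with basis indexed by a finType I are stored by *)
(* their components, i.e. their values on tuples of dual basis vectors        *)
(* (determinant pairing): a bivector B = 1/2 sum B^{ab} e_a/\e_b is stored   *)
(* as the antisymmetric array B a b ; a trivector likewise as a totally      *)
(* antisymmetric 3-array.                                                    *)

Section Multivectors.
Variables (R : ringType) (I : finType).

Definition wedge2 (u v : I -> R) : I -> I -> R :=
  fun a b => u a * v b - u b * v a.

(* components of sum_{k,b,d} M^{kbd} e_k /\ e_b /\ e_d *)
Definition alt3 (M : I -> I -> I -> R) : I -> I -> I -> R :=
  fun p q s => M p q s + M q s p + M s p q - M q p s - M p s q - M s q p.

Definition wedge12 (u : I -> R) (B : I -> I -> R) : I -> I -> I -> R :=
  fun p q s => u p * B q s + u q * B s p + u s * B p q.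

End Multivectors.

Section LieAlgebra.
Variables (R : ringType) (n : nat).
Implicit Types (c : 'I_n -> 'I_n -> 'I_n -> R).

Definition basis_vec (k : 'I_n) : 'I_n -> R := fun j => (j == k)%:R.

Definition lie_br c (u v : 'I_n -> R) : 'I_n -> R :=
  fun k => \sum_(a < n) \sum_(b < n) u a * v b * c a b k.

Definition is_lie_algebra c : Prop :=
  (forall a b k, c a b k = - c b a k) /\
  (forall a b d m, \sum_(k < n) (c a b k * c k d m + c b d k * c k a m
                                 + c d a k * c k b m) = 0).

(* adjoint action of h in g on a bivector B in wedge^2 g :
   ad_h (x /\ y) = [h,x] /\ y + x /\ [h,y] *)
Definition ad_biv c (h : 'I_n -> R) (B : 'I_n -> 'I_n -> R) : 'I_n -> 'I_n -> R :=
  fun a b => \sum_(k < n) lie_br c h (basis_vec k) a * B k b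
           + \sum_(k < n) B a k * lie_br c h (basis_vec k) b.

(* Schouten bracket wedge^2 g x wedge^2 g -> wedge^3 g extending the Lie
   bracket: [P,Q] = sum_{a,b,c,d} P^{ab} Q^{cd} [e_a,e_c] /\ e_b /\ e_d *)
Definition lie_schouten c (P Q : 'I_n -> 'I_n -> R) : 'I_n -> 'I_n -> 'I_n -> R :=
  alt3 (fun k b d => \sum_(a < n) \sum_(a' < n) P a b * Q a' d * c a a' k).

End LieAlgebra.

Section Analysis.
Variables (R : realType) (l : nat).

(* coordinate vector field d/d lambda^i on h^* = R^l (coordinates lambda^i
   induced by the basis h_1..h_l of h) *)
Definition partial (i : 'I_l) (f : 'rV[R]_l -> R) : 'rV[R]_l -> R :=
  fun x => 'D_(delta_mx 0 i) f x.

Definition iter_derive (vs : seq 'rV[R]_l) (f : 'rV[R]_l -> R) : 'rV[R]_l -> R :=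
  foldr (fun v g => fun x => 'D_v g x) f vs.

Definition smooth (f : 'rV[R]_l -> R) : Prop :=
  forall (vs : seq 'rV[R]_l) (x : 'rV[R]_l), differentiable (iter_derive vs f) x.

End Analysis.

Section DynamicalRMatrix.
Variables (R : realType) (n l : nat).
Variables (c : 'I_n -> 'I_n -> 'I_n -> R) (hv : 'I_l -> 'I_n -> R).

Definition abelian_subalgebra_basis : Prop :=
  (forall x : 'I_l -> R, (forall a, \sum_(i < l) x i * hv i a = 0) ->
      forall i, x i = 0) /\
  (forall i j k, lie_br c (hv i) (hv j) k = 0).

Definition smooth_biv (r : 'rV[R]_l -> 'I_n -> 'I_n -> R) : Prop :=
  (forall x a b, r x a b = - r x b a) /\ (forall a b, smooth (fun x => r x a b)).

Definition zero_weight (r : 'rV[R]_l -> 'I_n -> 'I_n -> R) : Prop :=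
  forall (y : 'I_l -> R) (x : 'rV[R]_l) a b,
    ad_biv c (fun k => \sum_(i < l) y i * hv i k) (r x) a b = 0.

Definition CDYBE (r : 'rV[R]_l -> 'I_n -> 'I_n -> R) : Prop :=
  forall (x : 'rV[R]_l) p q s,
    \sum_(i < l) wedge12 (hv i) (fun a b => partial i (fun y => r y a b) x) p q s
    + 2^-1 * lie_schouten c (r x) (r x) p q s = 0.

Definition triangular_dynamical_r_matrix (r : 'rV[R]_l -> 'I_n -> 'I_n -> R) : Prop :=
  smooth_biv r /\ zero_weight r /\ CDYBE r.

(* Global frame of A indexed by 'I_l + 'I_n :
   inl i = d/d lambda^i (a vector field), inr a = e_a (constant g-section). *)
Definition Aidx := ('I_l + 'I_n)%type.

(* structure functions of the bracket of A in this frame: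
   [d_i, d_j] = 0, [d_i, e_a] = 0, [e_a, e_b] = sum_k c a b k e_k *)
Definition A_struct (al be ga : Aidx) : R :=
  match al, be, ga with
  | inr a, inr b, inr k => c a b k
  | _, _, _ => 0
  end.

Definition A_anchor (al : Aidx) (f : 'rV[R]_l -> R) : 'rV[R]_l -> R :=
  match al with
  | inl i => partial i f
  | inr _ => fun _ => 0
  end.

(* Schouten bracket of A on bivector sections P = 1/2 sum P^{ab} E_a/\E_b,
   Q likewise (components functions of lambda).  Obtained by expanding with
   R-bilinearity, [X,f] = anchor(X) f, [E_a,E_b] = C_{ab}^g E_g and the
   graded Leibniz rule:
   [P,Q] = sum P^{ab}Q^{gd} C_{ag}^e E_e/\E_b/\E_d
         + 1/2 sum P^{ab} rho_a(Q^{gd}) E_g/\E_b/\E_d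
         - 1/2 sum Q^{gd} rho_g(P^{ab}) E_a/\E_b/\E_d. *)
Definition A_schouten (P Q : 'rV[R]_l -> Aidx -> Aidx -> R)
  : 'rV[R]_l -> Aidx -> Aidx -> Aidx -> R :=
  fun x => alt3 (fun e b d =>
      \sum_(al : Aidx) \sum_(ga : Aidx) P x al b * Q x ga d * A_struct al ga e
    + 2^-1 * \sum_(al : Aidx) P x al b * A_anchor al (fun y => Q y e d) x
    - 2^-1 * \sum_(ga : Aidx) Q x ga d * A_anchor ga (fun y => P y e b) x).

Definition secA_g (u : 'I_n -> R) : Aidx -> R :=
  fun al => match al with inr a => u a | inl _ => 0 end.
Definition secA_T (i : 'I_l) : Aidx -> R :=
  fun al => match al with inl j => (j == i)%:R | inr _ => 0 end.
Definition bivA_g (B : 'I_n -> 'I_n -> R) : Aidx -> Aidx -> R :=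
  fun al be => match al, be with inr a, inr b => B a b | _, _ => 0 end.

Definition Lambda (r : 'rV[R]_l -> 'I_n -> 'I_n -> R) : 'rV[R]_l -> Aidx -> Aidx -> R :=
  fun x al be => \sum_(i < l) wedge2 (secA_g (hv i)) (secA_T i) al be
                 + bivA_g (r x) al be.

End DynamicalRMatrix.

(* Main.v *)
Require Import Defs.
From mathcomp Require Import all_boot all_order all_algebra.
From mathcomp Require Import all_classical all_reals all_analysis.
From mathcomp Require Import ring lra.
Import GRing.Theory Num.Theory.
Local Open Scope ring_scope.
Section P.
Variables (R : realType) (n l : nat) (c : 'I_n -> 'I_n -> 'I_n -> R)
  (hv : 'I_l -> 'I_n -> R) (r : 'rV[R]_l -> 'I_n -> 'I_n -> R).
Local Notation Lam := (Lambda hv r).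

Lemma sumA (F : Aidx n l -> R) :
  \sum_(al : Aidx n l) F al = \sum_i F (inl i) + \sum_a F (inr a).
Proof. exact: big_sumType. Qed.

Lemma sum_delta m (F : 'I_m -> R) j : \sum_i F i * (j == i)%:R = F j.
Proof.
rewrite (bigD1 j) //= eqxx mulr1 big1 ?addr0 // => i /negbTE.
by rewrite eq_sym => ->; rewrite mulr0.
Qed.

Lemma Lam_ll x i j : Lam x (inl i) (inl j) = 0.
Proof. by rewrite /Lambda /wedge2 /= big1 ?addr0 // => k _; rewrite !mul0r subrr. Qed.
Lemma Lam_lr x j a : Lam x (inl j) (inr a) = - hv j a.
Proof.
rewrite /Lambda /wedge2 /= addr0. 

under eq_bigr do rewrite mul0r sub0r.
by rewrite sumrN sum_delta.
Qed.
Lemma Lam_rl x j a : Lam x (inr a) (inl j) = hv j a.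
Proof.
rewrite /Lambda /wedge2 /= addr0. 
under eq_bigr do rewrite mulr0 subr0.
by rewrite sum_delta.
Qed.
Lemma Lam_rr x a b : Lam x (inr a) (inr b) = r x a b.
Proof.
by rewrite /Lambda /wedge2 /= big1 ?add0r // => k _; rewrite !mulr0 subrr.
Qed.

Lemma dLam_lx x i j d :
  partial i (fun y => Lam y (inl j) d) x = 0.
Proof.
have -> : (fun y => Lam y (inl j) d) = cst (Lam x (inl j) d).
  apply: boolp.funext => y /=; case: d => [k|a]; by rewrite ?Lam_ll ?Lam_lr.
exact: derive_cst.
Qed.

Lemma dLam_rl x i k j :
  partial i (fun y => Lam y (inr k) (inl j)) x = 0.
Proof.
have -> : (fun y => Lam y (inr k) (inl j)) = cst (Lam x (inr k) (inl j)).
  by apply: boolp.funext => y /=; rewrite !Lam_rl.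
exact: derive_cst.
Qed.

Lemma dLam_rr x i k b :
  partial i (fun y => Lam y (inr k) (inr b)) x = partial i (fun y => r y k b) x.
Proof.
by have -> : (fun y => Lam y (inr k) (inr b)) = (fun y => r y k b)
  by apply: boolp.funext => y; rewrite Lam_rr.
Qed.

Definition Mi x (e b d : Aidx n l) : R :=
      \sum_(al : Aidx n l) \sum_(ga : Aidx n l) Lam x al b * Lam x ga d * A_struct c al ga e
    + 2^-1 * \sum_(al : Aidx n l) Lam x al b * A_anchor al (fun y => Lam y e d) x
    - 2^-1 * \sum_(ga : Aidx n l) Lam x ga d * A_anchor ga (fun y => Lam y e b) x.

Lemma schoutenE x p q s : A_schouten c Lam Lam x p q s = alt3 (Mi x) p q s.
Proof. by []. Qed.

Lemma S1_l x j b d : \sum_(al : Aidx n l) \sum_(ga : Aidx n l)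
   Lam x al b * Lam x ga d * A_struct c al ga (inl j) = 0.
Proof. by rewrite big1 // => al _; rewrite big1 // => ga _; case: al; case: ga => *; rewrite mulr0. Qed.


Lemma S1_r x k b d : \sum_(al : Aidx n l) \sum_(ga : Aidx n l)
   Lam x al b * Lam x ga d * A_struct c al ga (inr k) =
   \sum_a \sum_a' Lam x (inr a) b * Lam x (inr a') d * c a a' k.
Proof.
rewrite sumA big1 ?add0r; last by move=> i _; rewrite big1 // => ga _; rewrite mulr0.
apply: eq_bigr => a _; rewrite sumA big1 ?add0r //.
by move=> i _; rewrite mulr0.
Qed.

Lemma anchorE x (G : Aidx n l -> R) (f : 'rV[R]_l -> R):
  \sum_(al : Aidx n l) G al * A_anchor al f x =
  \sum_i G (inl i) * partial i f x.
Proof.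
rewrite sumA [X in _ + X]big1 ?addr0 //.
by move=> a _; rewrite /= mulr0.
Qed.

Lemma Mi_l x j b d : Mi x (inl j) b d = 0.
Proof.
rewrite /Mi S1_l !anchorE.
rewrite !big1 ?mulr0 ?subrr ?add0r ?oppr0 // => i _; by rewrite dLam_lx mulr0.
Qed.


Lemma Mi_rrr x k b d : Mi x (inr k) (inr b) (inr d) =
  \sum_a \sum_a' r x a b * r x a' d * c a a' k +
  \sum_i (2^-1 * (- hv i b * partial i (fun y => r y k d) x)
          - 2^-1 * (- hv i d * partial i (fun y => r y k b) x)).
Proof.
rewrite /Mi S1_r !anchorE sumrB -!mulr_sumr addrA.
congr (_ + _ * _ - _ * _).
- by apply: eq_bigr => a _; apply: eq_bigr => a' _; rewrite !Lam_rr.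
- by apply: eq_bigr => i _; rewrite Lam_lr dLam_rr.
- by apply: eq_bigr => i _; rewrite Lam_lr dLam_rr.
Qed.

Lemma Mi_rrl x k b j : Mi x (inr k) (inr b) (inl j) =
  \sum_a \sum_a' r x a b * hv j a' * c a a' k.
Proof.
rewrite /Mi S1_r !anchorE.
rewrite [X in _ + 2^-1 * X - _]big1; last by move=> i _; rewrite dLam_rl mulr0.
rewrite [X in _ - 2^-1 * X]big1; last by move=> i _; rewrite Lam_ll mul0r.
rewrite mulr0 subr0 addr0.
by apply: eq_bigr => a _; apply: eq_bigr => a' _; rewrite Lam_rr Lam_rl.
Qed.

Lemma Mi_rlr x k j d : Mi x (inr k) (inl j) (inr d) =
  \sum_a \sum_a' hv j a * r x a' d * c a a' k.
Proof.
rewrite /Mi S1_r !anchorE.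
rewrite [X in _ + 2^-1 * X - _]big1; last by move=> i _; rewrite Lam_ll mul0r.
rewrite [X in _ - 2^-1 * X]big1; last by move=> i _; rewrite dLam_rl mulr0.
rewrite mulr0 subr0 addr0.
by apply: eq_bigr => a _; apply: eq_bigr => a' _; rewrite Lam_rr Lam_rl.
Qed.

Lemma Mi_rll x k i j : Mi x (inr k) (inl i) (inl j) = lie_br c (hv i) (hv j) k.
Proof.
rewrite /Mi S1_r !anchorE.
rewrite [X in _ + 2^-1 * X - _]big1; last by move=> i' _; rewrite Lam_ll mul0r.
rewrite [X in _ - 2^-1 * X]big1; last by move=> i' _; rewrite Lam_ll mul0r.
rewrite mulr0 subr0 addr0.
by apply: eq_bigr => a _; apply: eq_bigr => a' _; rewrite !Lam_rl.
Qed.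


Lemma alt3_ext (I : finType) (A B : I -> I -> I -> R) p q s :
  (forall e b d, A e b d = B e b d) -> alt3 A p q s = alt3 B p q s.
Proof. by move=> H; rewrite /alt3 !H. Qed.

Lemma alt3_add (I : finType) (A B : I -> I -> I -> R) p q s :
  alt3 (fun e b d => A e b d + B e b d) p q s = alt3 A p q s + alt3 B p q s.
Proof. rewrite /alt3; ring. Qed.

Lemma alt3_sum (I J : finType) (F : J -> I -> I -> I -> R) p q s :
  alt3 (fun e b d => \sum_j F j e b d) p q s = \sum_j alt3 (F j) p q s.
Proof. by rewrite /alt3 !sumrB !big_split. Qed.

Lemma alt3_cyc (I : finType) (A : I -> I -> I -> R) p q s :
  alt3 A p q s = alt3 A q s p.
Proof. rewrite /alt3; ring. Qed.

Lemma alt3_pt (h : 'I_n -> R) (D : 'I_n -> 'I_n -> R) p q s :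
  (forall a b, D a b = - D b a) ->
  alt3 (fun k b d => 2^-1 * (- h b * D k d) - 2^-1 * (- h d * D k b)) p q s
  = 2 * wedge12 h D p q s.
Proof.
move=> HD; rewrite /alt3 /wedge12 (HD p s) (HD q p) (HD s q).
by field.
Qed.

Lemma lie_br_basis (h : 'I_n -> R) k q :
  lie_br c h (@basis_vec R n k) q = \sum_a h a * c a k q.
Proof.
apply: eq_bigr => a _; rewrite (bigD1 k) //= /basis_vec eqxx mulr1 big1 ?addr0 //.
by move=> b /negbTE ->; rewrite mulr0 mul0r.
Qed.


Hypothesis Hc : forall a b k, c a b k = - c b a k.
Hypothesis Hr : forall x a b, r x a b = - r x b a.
Hypothesis Hsm : forall a b, smooth (fun x => r x a b).

Lemma D_anti x i a b :
  partial i (fun y => r y a b) x = - partial i (fun y => r y b a) x.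
Proof.
have -> : (fun y => r y a b) = - (fun y => r y b a).
  by apply: boolp.funext => y /=; rewrite Hr.
rewrite /partial deriveN //.
exact: diff_derivable (Hsm b a [::] x).
Qed.

Lemma caseA x p q s :
  alt3 (Mi x) (inr p) (inr q) (inr s) =
  2 * (\sum_(i < l) wedge12 (hv i) (fun a b => partial i (fun y => r y a b) x) p q s
    + 2^-1 * lie_schouten c (r x) (r x) p q s).
Proof.
rewrite (_ : alt3 (Mi x) (inr p) (inr q) (inr s) =
   alt3 (fun k b d => Mi x (inr k) (inr b) (inr d)) p q s) //.
rewrite (@alt3_ext _ _ _ _ _ _ (Mi_rrr x)) alt3_add [X in _ + X]alt3_sum.
rewrite [X in _ + X = _](eq_bigr (fun i => 2 * wedge12 (hv i) (fun a b => partial i (fun y => r y a b) x) p q s)); last first.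
  by move=> i _; apply: (alt3_pt (hv i) (fun a b => partial i (fun y => r y a b) x)) => a b; apply: D_anti.
rewrite -mulr_sumr /lie_schouten.
by field.
Qed.

Lemma caseB x j q s :
  alt3 (Mi x) (inl j) (inr q) (inr s) = -2 * ad_biv c (hv j) (r x) q s.
Proof.
rewrite /alt3 !Mi_l Mi_rrl !Mi_rlr Mi_rrl.
set X := \sum_k \sum_a hv j a * c a k q * r x k s.
set Y := \sum_k \sum_a r x q k * (hv j a * c a k s).
have e1 : \sum_a \sum_a' r x a s * hv j a' * c a a' q = - X.
  rewrite /X -sumrN; apply: eq_bigr => k _; rewrite -sumrN; apply: eq_bigr => a _.
  rewrite (Hc k a q); ring.
have e3 : \sum_a \sum_a' hv j a * r x a' s * c a a' q = X.
  rewrite /X exchange_big; apply: eq_bigr => k _; apply: eq_bigr => a _; ring.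
have e2 : \sum_a \sum_a' hv j a * r x a' q * c a a' s = - Y.
  rewrite /Y exchange_big -sumrN; apply: eq_bigr => k _; rewrite -sumrN; apply: eq_bigr => a _.
  rewrite (Hr x k q); ring.
have e4 : \sum_a \sum_a' r x a q * hv j a' * c a a' s = Y.
  rewrite /Y; apply: eq_bigr => k _; apply: eq_bigr => a _.
  rewrite (Hr x k q) (Hc k a s); ring.
have ead : ad_biv c (hv j) (r x) q s = X + Y.
  rewrite /ad_biv /X /Y; congr (_ + _); apply: eq_bigr => kk _;
    by rewrite lie_br_basis ?mulr_suml ?mulr_sumr.
rewrite e1 e2 e3 e4 ead; ring.
Qed.

Lemma caseC x i j s : abelian_subalgebra_basis c hv ->
  alt3 (Mi x) (inl i) (inl j) (inr s) = 0.
Proof.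
move=> [_ Hab]; rewrite /alt3 !Mi_l !Mi_rll !Hab; ring.
Qed.

Lemma caseD x i j k : alt3 (Mi x) (inl i) (inl j) (inl k) = 0.
Proof. rewrite /alt3 !Mi_l; ring. Qed.


Lemma ad_biv_lin (h : 'I_n -> R) B q s : ad_biv c h B q s =
  \sum_a h a * (\sum_k c a k q * B k s + \sum_k B q k * c a k s).
Proof.
rewrite /ad_biv; under [RHS]eq_bigr do rewrite mulrDr.
rewrite big_split; congr (_ + _).
- under [LHS]eq_bigr do rewrite lie_br_basis mulr_suml.
  rewrite exchange_big; apply: eq_bigr => a _; rewrite mulr_sumr.
  by apply: eq_bigr => k _; ring.
- under [LHS]eq_bigr do rewrite lie_br_basis mulr_sumr.
  rewrite exchange_big; apply: eq_bigr => a _; rewrite mulr_sumr.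
  by apply: eq_bigr => k _; ring.
Qed.

End P.

Theorem proposition2p1 (R : realType) (n l : nat)
  (c : 'I_n -> 'I_n -> 'I_n -> R) (hv : 'I_l -> 'I_n -> R)
  (r : 'rV[R]_l -> 'I_n -> 'I_n -> R) :
  is_lie_algebra c ->
  abelian_subalgebra_basis c hv ->
  smooth_biv r ->
  (triangular_dynamical_r_matrix c hv r <->
   (forall x p q s, A_schouten c (Lambda hv r) (Lambda hv r) x p q s = 0)).
Proof.
move=> Hlie Hab Hsb.
have Hc : forall a b k, c a b k = - c b a k := Hlie.1.
have Hr := Hsb.1; have Hsm := Hsb.2.
have hd : forall j : 'I_l, (fun k => \sum_i (i == j)%:R * hv i k) = hv j.
  move=> j; apply: boolp.funext => k; rewrite (bigD1 j) //= eqxx mul1r big1 ?addr0 //.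
  by move=> i /negbTE ->; rewrite mul0r.
split.
- move=> [_ [zw cd]] x p q s; rewrite schoutenE.
  have hB : forall j q s, alt3 (@Mi R n l c hv r x) (inl j) (inr q) (inr s) = 0.
    move=> j q' s'; rewrite (@caseB R n l c hv r Hc Hr).
    by have := zw (fun i => (i == j)%:R) x q' s'; rewrite hd => ->; rewrite mulr0.
  case: p => [i|p]; case: q => [j|q]; case: s => [k|s].
  + exact: caseD.
  + by apply: caseC.
  + by rewrite alt3_cyc alt3_cyc; apply: caseC.
  + exact: hB.
  + by rewrite alt3_cyc; apply: caseC.
  + by rewrite alt3_cyc; apply: hB.
  + by rewrite alt3_cyc alt3_cyc; apply: hB.
  + by rewrite (@caseA R n l c hv r Hr Hsm) cd mulr0.
- move=> H; split; first done; split.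
  + move=> y x a b.
    have ad0 : forall i, ad_biv c (hv i) (r x) a b = 0.
      move=> i; have := H x (inl i) (inr a) (inr b).
      rewrite schoutenE (@caseB R n l c hv r Hc Hr) => /eqP; rewrite mulf_eq0 => /orP [|/eqP //].
      by rewrite oppr_eq0 pnatr_eq0.
    rewrite ad_biv_lin.
    under eq_bigr do rewrite mulr_suml.
    rewrite exchange_big big1 // => i _.
    under eq_bigr do rewrite -mulrA.
    by rewrite -mulr_sumr -ad_biv_lin ad0 mulr0.
  + move=> x p q s; have := H x (inr p) (inr q) (inr s).
    rewrite schoutenE (@caseA R n l c hv r Hr Hsm) => /eqP; rewrite mulf_eq0 => /orP [|/eqP //].
    by rewrite pnatr_eq0.
Qed.
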